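(* Suppose that $$\forall\,\varepsilon>0\;\exists\,\delta>0\ \text{such that}\ j(\varphi,\psi)\le\varepsilon\ \ \forall\,(\varphi,\psi)\in U_+\ \text{with}\ \|\varphi\|_0\le\delta .$$ If $q(0)<0$, then the zero equilibrium of $w'(t)=q(v(t))w(t)$, $v'(t)=j(w_t,v_t)-\mu v(t)$ on $X_+$ is globally asymptotically stable (in the $C$- and $C^1$-norms).
   Context: Let $h>0$, $R_-<0$, $I=(R_-,\infty)$, $q:I\to\mathbb{R}$, $\mu>0$, $U=C^1([-h,0],\mathbb{R})\times C^1([-h,0],I)$, $j:U\to\mathbb{R}$, $U_+=C^1([-h,0],\mathbb{R}_+^2)$, $\|\cdot\|_0$ the sup-norm, $\|\phi\|_1=\|\phi\|_0+\|\phi'\|_0$; $x_t(s)=x(t+s)$. Define $F(\varphi,\psi)=(q(\psi(0))\varphi(0),\,j(\varphi,\psi)-\mu\psi(0))$ and $X_+=\{\phi\in C^1([-h,0],\mathbb{R}_+^2):\phi'(0)=F(\phi)\}\neq\emptyset$. Assume: $j$ is $C^1$ on $U$ with each derivative extending to a linear map on $C([-h,0],\mathbb{R}^2)$ depending continuously on $(\phi,\chi)$; for every bounded $B\subset U_+$ there is $L_B$ with $|j(\phi)-j(\chi)|\le L_B\|\phi-\chi\|_0$ on $B$; $j\ge0$ on $U_+$; $j(B_1\times B_2)$ is bounded whenever $B_1\times B_2\subset U_+$ with $B_1$ bounded; $q$ is bounded and $C^1$; and $q(s)<0$ for all $s>0$. Solutions from $X_+$ exist globally and define a continuous semiflow on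 $X_+$. Globally asymptotically stable means stable and attracting every solution from $X_+$. *)

(* Defs.v *)
From Stdlib Require Import Reals Lra.
From Coquelicot Require Import Coquelicot.
Open Scope R_scope.

(* Elements of C^1([-h,0],R) are represented by functions R -> R that are C^1
   on the whole real line (every C^1 function on [-h,0] has such an extension);
   only their values on [-h,0] ever matter (see locality of j below). *)
Definition C1 (f : R -> R) : Prop :=
  (forall t, ex_derive f t) /\ (forall t, continuous (Derive f) t).

Definition cont (f : R -> R) : Prop := forall t, continuous f t.

Definition sup0 (h : R) (f : R -> R) : R :=
  real (Lub_Rbar (fun y => exists s, -h <= s <= 0 /\ y = Rabs (f s))).

Definition nrm0 (h : R) (w v : R -> R) : R := Rmax (sup0 h w) (sup0 h v).

Definition nrm1 (h : R) (w v : R -> R) : R :=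
  nrm0 h w v + nrm0 h (Derive w) (Derive v).

Definition fsub (f g : R -> R) : R -> R := fun s => f s - g s.
Definition fadd (f g : R -> R) : R -> R := fun s => f s + g s.

Definition inU (h Rm : R) (w v : R -> R) : Prop :=
  C1 w /\ C1 v /\ forall s, -h <= s <= 0 -> Rm < v s.

Definition inUplus (h : R) (w v : R -> R) : Prop :=
  C1 w /\ C1 v /\ forall s, -h <= s <= 0 -> 0 <= w s /\ 0 <= v s.

Definition inXplus (h : R) (q : R -> R) (mu : R)
    (j : (R -> R) -> (R -> R) -> R) (w v : R -> R) : Prop :=
  inUplus h w v /\ Derive w 0 = q (v 0) * w 0 /\ Derive v 0 = j w v - mu * v 0.

Definition shift (x : R -> R) (t : R) : R -> R := fun s => x (t + s).

(* (w,v) is a (global) solution on [-h,oo) of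
     w'(t) = q(v(t)) w(t),  v'(t) = j(w_t,v_t) - mu v(t)   (t >= 0),
   with x_t in U for all t >= 0; x is represented by a C^1 function on R
   (its values on (-oo,-h) are irrelevant). *)
Definition is_solution (h Rm : R) (q : R -> R) (mu : R)
    (j : (R -> R) -> (R -> R) -> R) (w v : R -> R) : Prop :=
  C1 w /\ C1 v /\
  (forall t, 0 <= t -> inU h Rm (shift w t) (shift v t)) /\
  (forall t, 0 <= t ->
     Derive w t = q (v t) * w t /\
     Derive v t = j (shift w t) (shift v t) - mu * v t).

Definition standing (h Rm : R) (q : R -> R) (mu : R)
    (j : (R -> R) -> (R -> R) -> R) : Prop :=
  0 < h /\ Rm < 0 /\ 0 < mu /\
  (* j is a function on U: it only depends on values on [-h,0] *)
  (forall w1 v1 w2 v2, inU h Rm w1 v1 -> inU h Rm w2 v2 ->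
     (forall s, -h <= s <= 0 -> w1 s = w2 s /\ v1 s = v2 s) ->
     j w1 v1 = j w2 v2) /\
  (* j is C^1 on U (Frechet, w.r.t. ||.||_1), with derivatives extending to
     linear maps on C([-h,0],R^2) depending continuously on (phi,chi) *)
  (exists Dj : (R -> R) -> (R -> R) -> (R -> R) -> (R -> R) -> R,
     (forall w v, inU h Rm w v ->
        forall a b c1 c2 d1 d2, cont c1 -> cont c2 -> cont d1 -> cont d2 ->
          Dj w v (fun s => a * c1 s + b * d1 s) (fun s => a * c2 s + b * d2 s)
          = a * Dj w v c1 c2 + b * Dj w v d1 d2) /\
     (* it is a map on C([-h,0],R^2): depends only on values on [-h,0] *)
     (forall w v, inU h Rm w v ->
        forall c1 c2 d1 d2, cont c1 -> cont c2 -> cont d1 -> cont d2 ->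
          (forall s, -h <= s <= 0 -> c1 s = d1 s /\ c2 s = d2 s) ->
          Dj w v c1 c2 = Dj w v d1 d2) /\
     (forall w v, inU h Rm w v ->
        forall eps, 0 < eps -> exists del, 0 < del /\
          forall c1 c2, C1 c1 -> C1 c2 -> nrm1 h c1 c2 <= del ->
            inU h Rm (fadd w c1) (fadd v c2) ->
            Rabs (j (fadd w c1) (fadd v c2) - j w v - Dj w v c1 c2)
              <= eps * nrm1 h c1 c2) /\
     (forall w v, inU h Rm w v ->
        forall eps, 0 < eps -> exists del, 0 < del /\
          forall w' v', inU h Rm w' v' -> nrm1 h (fsub w' w) (fsub v' v) <= del ->
            forall c1 c2, C1 c1 -> C1 c2 ->
              Rabs (Dj w' v' c1 c2 - Dj w v c1 c2) <= eps * nrm1 h c1 c2) /\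
     (forall w v c1 c2, inU h Rm w v -> cont c1 -> cont c2 ->
        forall eps, 0 < eps -> exists del, 0 < del /\
          forall w' v' c1' c2', inU h Rm w' v' -> cont c1' -> cont c2' ->
            nrm1 h (fsub w' w) (fsub v' v) <= del ->
            nrm0 h (fsub c1' c1) (fsub c2' c2) <= del ->
            Rabs (Dj w' v' c1' c2' - Dj w v c1 c2) <= eps)) /\
  (forall B : (R -> R) -> (R -> R) -> Prop,
     (forall w v, B w v -> inUplus h w v) ->
     (exists r, forall w v, B w v -> nrm1 h w v <= r) ->
     exists L, forall w1 v1 w2 v2, B w1 v1 -> B w2 v2 ->
       Rabs (j w1 v1 - j w2 v2) <= L * nrm0 h (fsub w1 w2) (fsub v1 v2)) /\
  (forall w v, inUplus h w v -> 0 <= j w v) /\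
  (forall B1 B2 : (R -> R) -> Prop,
     (forall w v, B1 w -> B2 v -> inUplus h w v) ->
     (exists r, forall w, B1 w -> sup0 h w + sup0 h (Derive w) <= r) ->
     exists M, forall w v, B1 w -> B2 v -> Rabs (j w v) <= M) /\
  (exists M, forall s, Rm < s -> Rabs (q s) <= M) /\
  (forall s, Rm < s -> ex_derive q s /\ continuous (Derive q) s) /\
  (forall s, 0 < s -> q s < 0).

(* Main.v *)
Require Import Defs.
From Stdlib Require Import Reals Lra FunctionalExtensionality Classical.
From Coquelicot Require Import Coquelicot.
Open Scope R_scope.
Require Import Defs.


Lemma sup0_le h f B : 0 <= h -> (forall s, -h <= s <= 0 -> Rabs (f s) <= B) -> sup0 h f <= B.
Proof.
  intros Hh HB. unfold sup0.
  destruct (Lub_Rbar_correct (fun y => exists s, -h <= s <= 0 /\ y = Rabs (f s))) as [Hub Hl].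
  assert (H1 : Rbar_le (Lub_Rbar (fun y => exists s, -h <= s <= 0 /\ y = Rabs (f s))) B).
  { apply Hl. intros y [s [Hs ->]]. simpl. apply HB; auto. }
  assert (H2 : Rbar_le (Rabs (f 0)) (Lub_Rbar (fun y => exists s, -h <= s <= 0 /\ y = Rabs (f s)))).
  { apply Hub. exists 0. split; [lra|auto]. }
  destruct (Lub_Rbar _); simpl in *; try tauto.
Qed.

Lemma sup0_ge h f B : (forall s, -h <= s <= 0 -> Rabs (f s) <= B) ->
  forall s, -h <= s <= 0 -> Rabs (f s) <= sup0 h f.
Proof.
  intros HB s Hs. unfold sup0.
  destruct (Lub_Rbar_correct (fun y => exists s, -h <= s <= 0 /\ y = Rabs (f s))) as [Hub Hl].
  assert (H1 : Rbar_le (Lub_Rbar (fun y => exists s, -h <= s <= 0 /\ y = Rabs (f s))) B).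
  { apply Hl. intros y [s' [Hs' ->]]. simpl. apply HB; auto. }
  assert (H2 : Rbar_le (Rabs (f s)) (Lub_Rbar (fun y => exists s, -h <= s <= 0 /\ y = Rabs (f s)))).
  { apply Hub. exists s. split; [lra|auto]. }
  destruct (Lub_Rbar _); simpl in *; try tauto.
Qed.

Lemma sup0_nonneg h f : 0 <= h -> 0 <= sup0 h f.
Proof.
  intros Hh. unfold sup0.
  destruct (Lub_Rbar_correct (fun y => exists s, -h <= s <= 0 /\ y = Rabs (f s))) as [Hub Hl].
  assert (H2 : Rbar_le (Rabs (f 0)) (Lub_Rbar (fun y => exists s, -h <= s <= 0 /\ y = Rabs (f s)))).
  { apply Hub. exists 0. split; [lra|auto]. }
  destruct (Lub_Rbar _); simpl in *; try tauto; try lra.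
  pose proof (Rabs_pos (f 0)); lra.
Qed.

Lemma cont_bounded h f : 0 <= h -> (forall s, -h <= s <= 0 -> continuous f s) ->
  exists B, forall s, -h <= s <= 0 -> Rabs (f s) <= B.
Proof.
  intros Hh Hc.
  destruct (continuity_ab_maj (fun s => Rabs (f s)) (-h) 0) as [M [HM _]]; [lra| |].
  - intros c Hc'. apply continuity_pt_filterlim.
    apply (continuous_comp f Rabs). apply Hc; auto. apply continuous_Rabs.
  - exists (Rabs (f M)). auto.
Qed.

Lemma sup0_pt h f : 0 <= h -> (forall s, -h <= s <= 0 -> continuous f s) ->
  forall s, -h <= s <= 0 -> Rabs (f s) <= sup0 h f.
Proof.
  intros Hh Hc. destruct (cont_bounded h f Hh Hc) as [B HB]. apply (sup0_ge h f B HB).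
Qed.

Lemma sup0_const h c : 0 <= h -> sup0 h (fun _ => c) = Rabs c.
Proof.
  intros Hh. apply Rle_antisym.
  - apply sup0_le; auto. intros; lra.
  - apply (sup0_ge h (fun _ => c) (Rabs c) ltac:(intros; lra) 0); lra.
Qed.

Lemma deriv_bound f a b d K : a <= b ->
  (forall x, a <= x <= b -> is_derive f x (d x)) ->
  (forall x, a <= x <= b -> d x <= K) -> f b - f a <= K * (b - a).
Proof.
  intros Hab Hd HK.
  destruct (MVT_gen f a b d) as [c [Hc Heq]].
  - intros x Hx. rewrite Rmin_left in Hx by lra. rewrite Rmax_right in Hx by lra. apply Hd; lra.
  - intros x Hx. rewrite Rmin_left in Hx by lra. rewrite Rmax_right in Hx by lra.
    apply continuity_pt_filterlim. apply (@ex_derive_continuous R_AbsRing R_NormedModule). eexists; apply Hd; lra.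
  - rewrite Rmin_left in Hc by lra. rewrite Rmax_right in Hc by lra.
    rewrite Heq. apply Rmult_le_compat_r; [lra| apply HK; lra].
Qed.

Lemma deriv_bound_ge f a b d K : a <= b ->
  (forall x, a <= x <= b -> is_derive f x (d x)) ->
  (forall x, a <= x <= b -> K <= d x) -> K * (b - a) <= f b - f a.
Proof.
  intros Hab Hd HK.
  destruct (MVT_gen f a b d) as [c [Hc Heq]].
  - intros x Hx. rewrite Rmin_left in Hx by lra. rewrite Rmax_right in Hx by lra. apply Hd; lra.
  - intros x Hx. rewrite Rmin_left in Hx by lra. rewrite Rmax_right in Hx by lra.
    apply continuity_pt_filterlim. apply (@ex_derive_continuous R_AbsRing R_NormedModule). eexists; apply Hd; lra.
  - rewrite Rmin_left in Hc by lra. rewrite Rmax_right in Hc by lra.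
    rewrite Heq. apply Rmult_le_compat_r; [lra| apply HK; lra].
Qed.

Lemma C1_cont f : C1 f -> forall t, continuous f t.
Proof. intros [H _] t. apply (@ex_derive_continuous R_AbsRing R_NormedModule). apply H. Qed.

Lemma is_derive_shift f t s : ex_derive f (t + s) -> is_derive (shift f t) s (Derive f (t + s)).
Proof.
  intros H. unfold shift.
  assert (Hg: is_derive (fun s => t + s) s 1) by (auto_derive; auto; ring).
  pose proof (is_derive_comp f (fun s => t+s) s _ _ (Derive_correct _ _ H) Hg) as HH.
  replace (Derive f (t + s)) with (scal 1 (Derive f (t + s))). exact HH. unfold scal; simpl; unfold mult; simpl; ring.
Qed.

Lemma Derive_shift f t : C1 f -> Derive (shift f t) = shift (Derive f) t.
Proof.
  intros [H _]. apply functional_extensionality. intros s.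
  apply is_derive_unique. apply is_derive_shift. apply H.
Qed.

Lemma C1_shift f t : C1 f -> C1 (shift f t).
Proof.
  intros Hf. pose proof Hf as [H1 H2]. split.
  - intros s. eexists. apply is_derive_shift. apply H1.
  - rewrite Derive_shift; auto. intros s. unfold shift.
    apply (continuous_comp (fun s => t + s) (Derive f)).
    apply (@ex_derive_continuous R_AbsRing R_NormedModule); auto_derive; auto. apply H2.
Qed.

Ltac deta := repeat match goal with |- context [fun x : R => ?f x] => change (fun x : R => f x) with f end.

Lemma w_nonneg h Rm q mu j w v Q :
  0 < h -> (forall s, Rm < s -> Rabs (q s) <= Q) ->
  is_solution h Rm q mu j w v -> inXplus h q mu j w v ->
  forall t, 0 <= t -> 0 <= w t.
Proof.
  intros Hh HQ [Cw [Cv [HU Hd]]] [[_ [_ Hpos]] _] t1 Ht1.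
  destruct (Rle_or_lt 0 (w t1)) as [|Hneg]; auto. exfalso.
  assert (Hw0 : 0 <= w 0) by (apply (Hpos 0); lra).
  destruct (IVT_gen w 0 t1 0) as [x [Hx Hwx]].
  - intro; apply continuity_pt_filterlim. apply C1_cont; auto.
  - split. apply Rle_trans with (w t1). apply Rmin_r. lra. apply Rle_trans with (w 0); auto. apply Rmax_l.
  - rewrite Rmin_left in Hx by lra. rewrite Rmax_right in Hx by lra.
    pose (g := fun t => w t ^ 2 * exp (- (2 * Q) * t)).
    assert (Hle := deriv_bound g x t1
       (fun t => 2 * w t * Derive w t * exp (- (2*Q) * t) + w t ^ 2 * (- (2*Q) * exp (- (2 * Q) * t))) 0
       ltac:(lra)).
    assert (g t1 - g x <= 0).
    { replace 0 with (0 * (t1 - x)) by ring. apply Hle.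
      - intros y Hy. unfold g. auto_derive. apply Cw. deta; ring.
      - intros y Hy. destruct (Hd y ltac:(lra)) as [Hdw _]. rewrite Hdw.
        assert (Hvy : Rm < v y).
        { destruct (HU y ltac:(lra)) as [_ [_ Hr]]. specialize (Hr 0 ltac:(lra)).
          unfold shift in Hr. rewrite Rplus_0_r in Hr. auto. }
        pose proof (HQ _ Hvy) as Hq. apply Rabs_le_between in Hq.
        pose proof (exp_pos (- (2 * Q) * y)).
        assert (0 <= w y ^ 2) by (apply pow2_ge_0).
        replace (2 * w y * (q (v y) * w y) * exp (- (2 * Q) * y) +
          w y ^ 2 * (- (2 * Q) * exp (- (2 * Q) * y))) with
          (2 * (w y ^ 2 * exp (- (2 * Q) * y)) * (q (v y) - Q)) by ring.
        assert (0 <= w y ^ 2 * exp (- (2 * Q) * y)) by (apply Rmult_le_pos; lra).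
        nra. }
    unfold g in H. rewrite Hwx in H.
    pose proof (exp_pos (- (2 * Q) * t1)).
    assert (0 < w t1 ^ 2) by nra. nra.
Qed.

Lemma Derive_const_fun c : Derive (fun _ : R => c) = (fun _ => 0).
Proof. apply functional_extensionality; intros; apply Derive_const. Qed.

Lemma C1_const c : C1 (fun _ => c).
Proof.
  split. intros; auto_derive; auto. rewrite Derive_const_fun. intros; apply continuous_const.
Qed.

Lemma Derive_addc b c : C1 b -> Derive (fun x => b x + c) = Derive b.
Proof.
  intros [H _]. apply functional_extensionality; intros x. apply is_derive_unique.
  auto_derive. apply H. deta; ring.
Qed.

Lemma C1_addc b c : C1 b -> C1 (fun x => b x + c).
Proof.
  intros Hb. pose proof Hb as [H1 H2]. split.
  - intros; auto_derive; auto.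
  - rewrite Derive_addc; auto.
Qed.

Lemma Derive_fsub a b : C1 a -> C1 b -> Derive (fsub a b) = fun x => Derive a x - Derive b x.
Proof.
  intros [Ha _] [Hb _]. apply functional_extensionality; intros x. apply is_derive_unique.
  unfold fsub. auto_derive. split; auto. deta; ring.
Qed.

Lemma abs_tri a b c : Rabs (a - b) <= c -> Rabs a <= Rabs b + c.
Proof.
  intros H. replace a with (b + (a - b)) by ring. eapply Rle_trans. apply Rabs_triang. lra.
Qed.

Lemma nrm1_0c h c : 0 <= h -> nrm1 h (fun _ => 0) (fun _ => c) = Rabs c.
Proof.
  intros Hh. unfold nrm1, nrm0. rewrite !Derive_const_fun, !sup0_const by lra.
  rewrite Rabs_R0. rewrite Rmax_right by apply Rabs_pos. rewrite Rmax_left by lra. ring.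
Qed.

Lemma lipJ h Rm q mu j : standing h Rm q mu j ->
  forall w0 v0, inU h Rm w0 v0 -> exists L del, 0 < L /\ 0 < del /\
  forall a b m r, C1 a -> C1 b -> 0 <= m -> 0 <= r -> Rm + 2 * m < 0 -> 2 * r + m <= del ->
   (forall x, -h <= x <= 0 -> -m <= b x) ->
   (forall x, -h <= x <= 0 -> Rabs (a x - w0 x) <= r /\ Rabs (b x - v0 x) <= r /\
        Rabs (Derive a x - Derive w0 x) <= r /\ Rabs (Derive b x - Derive v0 x) <= r) ->
   Rabs (j a (fun x => b x + m) - j a b) <= L * m.
Proof.
  intros Hst w0 v0 HU0.
  destruct Hst as (Hh & HRm & Hmu & Hloc & (Dj & Hlin & Hext & Hfr & Hop & Hjt) & HLip & Hjpos & Hjbd & HqB & Hqd & Hqneg).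
  destruct (Hop w0 v0 HU0 1 Rlt_0_1) as [del [Hdel Hopd]].
  set (D0 := Dj w0 v0 (fun _ => 0) (fun _ => 1)).
  exists (Rabs D0 + 1), del. split; [pose proof (Rabs_pos D0); lra|]. split; auto.
  intros a b m r Ca Cb Hm Hr HRm2 Hdr Hbm Hcl.
  destruct HU0 as [Cw0 [Cv0 _]].
  set (bs := fun s x => b x + s * m).
  assert (HUs : forall s, -1 <= s -> inU h Rm a (bs s)).
  { intros s Hs. split; auto. split. apply C1_addc; auto.
    intros x Hx. unfold bs. pose proof (Hbm x Hx). nra. }
  assert (HD : forall s, 0 <= s <= 1 -> Rabs (Dj a (bs s) (fun _ => 0) (fun _ => 1)) <= Rabs D0 + 1).
  { intros s Hs. pose proof Hs as [Hs0 Hs1].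
    assert (Hn : nrm1 h (fsub a w0) (fsub (bs s) v0) <= del).
    { unfold nrm1, nrm0. rewrite !Derive_fsub; auto; [|apply C1_addc; auto].
      unfold bs at 2. rewrite Derive_addc; auto.
      assert (sup0 h (fsub a w0) <= r).
      { apply sup0_le; [lra|]. intros x Hx. apply Hcl; auto. }
      assert (sup0 h (fsub (bs s) v0) <= r + m).
      { apply sup0_le; [lra|]. intros x Hx. unfold fsub, bs.
        replace (b x + s * m - v0 x) with ((b x - v0 x) + s * m) by ring.
        eapply Rle_trans. apply Rabs_triang. rewrite (Rabs_pos_eq (s * m)) by nra.
        destruct (Hcl x Hx) as (_ & H2 & _). nra. }
      assert (sup0 h (fun x => Derive a x - Derive w0 x) <= r).
      { apply sup0_le; [lra|]. intros x Hx. apply Hcl; auto. }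
      assert (sup0 h (fun x => Derive b x - Derive v0 x) <= r).
      { apply sup0_le; [lra|]. intros x Hx. apply Hcl; auto. }
      assert (Rmax (sup0 h (fsub a w0)) (sup0 h (fsub (bs s) v0)) <= r + m) by (apply Rmax_lub; lra).
      assert (Rmax (sup0 h (fun x => Derive a x - Derive w0 x)) (sup0 h (fun x => Derive b x - Derive v0 x)) <= r) by (apply Rmax_lub; lra).
      lra. }
    pose proof (Hopd a (bs s) (HUs s ltac:(lra)) Hn (fun _ => 0) (fun _ => 1) (C1_const 0) (C1_const 1)) as H.
    rewrite nrm1_0c in H by lra. rewrite Rabs_R1 in H. apply abs_tri. fold D0 in H. lra. }
  assert (Hder : forall s, 0 <= s -> is_derive (fun s => j a (bs s)) s (m * Dj a (bs s) (fun _ => 0) (fun _ => 1))).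
  { intros s Hs. apply is_derive_Reals. intros eps Heps.
    assert (Heps' : 0 < eps / (2 * (m + 1))) by (apply Rdiv_lt_0_compat; lra).
    destruct (Hfr a (bs s) (HUs s ltac:(lra)) _ Heps') as [d [Hd Hfd]].
    assert (Hpos : 0 < Rmin 1 (d / (m + 1))).
    { apply Rmin_glb_lt. lra. apply Rdiv_lt_0_compat; lra. }
    exists (mkposreal _ Hpos). intros tau Ht0 Ht. simpl in Ht.
    assert (Ht1 : Rabs tau < 1) by (eapply Rlt_le_trans; [apply Ht| apply Rmin_l]).
    assert (Ht2 : Rabs tau < d / (m + 1)) by (eapply Rlt_le_trans; [apply Ht| apply Rmin_r]).
    specialize (Hfd (fun _ => 0) (fun _ => tau * m) (C1_const 0) (C1_const _)).
    rewrite nrm1_0c in Hfd by lra.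
    assert (E1 : fadd a (fun _ => 0) = a) by (apply functional_extensionality; intros; unfold fadd; ring).
    assert (E2 : fadd (bs s) (fun _ => tau * m) = bs (s + tau)) by (apply functional_extensionality; intros; unfold fadd, bs; ring).
    rewrite E1, E2 in Hfd.
    assert (E3 : Dj a (bs s) (fun _ => 0) (fun _ => tau * m) = tau * m * Dj a (bs s) (fun _ => 0) (fun _ => 1)).
    { pose proof (Hlin a (bs s) (HUs s ltac:(lra)) (tau * m) 0 (fun _ => 0) (fun _ => 1) (fun _ => 0) (fun _ => 0)
        (C1_cont _ (C1_const 0)) (C1_cont _ (C1_const 1)) (C1_cont _ (C1_const 0)) (C1_cont _ (C1_const 0))) as HL.
      assert (F1 : (fun _ : R => tau * m * 0 + 0 * 0) = (fun _ => 0)) by (apply functional_extensionality; intros; ring).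
      assert (F2 : (fun _ : R => tau * m * 1 + 0 * 0) = (fun _ => tau * m)) by (apply functional_extensionality; intros; ring).
      change (Dj a (bs s) (fun _ : R => tau * m * 0 + 0 * 0) (fun _ : R => tau * m * 1 + 0 * 0) =
        tau * m * Dj a (bs s) (fun _ => 0) (fun _ => 1) + 0 * Dj a (bs s) (fun _ => 0) (fun _ => 0)) in HL.
      rewrite F1, F2 in HL. rewrite HL. ring. }
    rewrite E3 in Hfd.
    assert (Htm : Rabs (tau * m) <= d).
    { rewrite Rabs_mult, (Rabs_pos_eq m) by lra.
      assert (Rabs tau * (m + 1) <= d).
      { apply Rmult_lt_compat_r with (r := m + 1) in Ht2; [|lra].
        unfold Rdiv in Ht2. rewrite Rmult_assoc, Rinv_l in Ht2 by lra. lra. }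
      pose proof (Rabs_pos tau). nra. }
    specialize (Hfd Htm (HUs (s + tau) ltac:(apply Rabs_def2 in Ht1; lra))).
    replace ((j a (bs (s + tau)) - j a (bs s)) / tau - m * Dj a (bs s) (fun _ => 0) (fun _ => 1))
      with ((j a (bs (s + tau)) - j a (bs s) - tau * m * Dj a (bs s) (fun _ => 0) (fun _ => 1)) / tau)
      by (field; auto).
    rewrite Rabs_div by auto.
    assert (Hta : 0 < Rabs tau) by (apply Rabs_pos_lt; auto).
    apply (Rmult_lt_reg_r (Rabs tau)); auto. unfold Rdiv. rewrite Rmult_assoc, Rinv_l by lra. rewrite Rmult_1_r.
    eapply Rle_lt_trans; [apply Hfd|]. rewrite Rabs_mult, (Rabs_pos_eq m) by lra.
    assert (eps / (2 * (m + 1)) * m < eps).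
    { unfold Rdiv. apply Rlt_le_trans with (eps * / (2 * (m+1)) * (2 * (m + 1))).
      apply Rmult_lt_compat_l. auto. lra. rewrite Rmult_assoc, Rinv_l by lra. lra. }
    nra. }
  destruct (MVT_gen (fun s => j a (bs s)) 0 1 (fun s => m * Dj a (bs s) (fun _ => 0) (fun _ => 1))) as [c [Hc Heq]].
  - intros x Hx. rewrite Rmin_left in Hx by lra. rewrite Rmax_right in Hx by lra. apply Hder; lra.
  - intros x Hx. rewrite Rmin_left in Hx by lra. rewrite Rmax_right in Hx by lra.
    apply continuity_pt_filterlim. apply (@ex_derive_continuous R_AbsRing R_NormedModule). eexists; apply Hder; lra.
  - rewrite Rmin_left in Hc by lra. rewrite Rmax_right in Hc by lra.
    assert (B1 : bs 1 = fun x => b x + m) by (apply functional_extensionality; intros; unfold bs; ring).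
    assert (B0 : bs 0 = b) by (apply functional_extensionality; intros; unfold bs; ring).
    simpl in Heq. rewrite B1, B0 in Heq. rewrite Heq.
    rewrite Rminus_0_r, Rmult_1_r, Rabs_mult, (Rabs_pos_eq m) by lra.
    rewrite Rmult_comm. apply Rmult_le_compat_r; auto.
Qed.

Lemma exp_le x y : x <= y -> exp x <= exp y.
Proof. intros H. destruct (Req_dec x y). subst; lra. apply Rlt_le, exp_increasing; lra. Qed.

Lemma unif_cont f : (forall t, continuous f t) -> forall a b eps, 0 < eps ->
  exists d, 0 < d /\ forall x y, a <= x <= b -> a <= y <= b -> Rabs (x - y) < d -> Rabs (f x - f y) < eps.
Proof.
  intros Hf a b eps Heps.
  destruct (Heine f (fun c => a <= c <= b) (compact_P3 a b)) with (eps := mkposreal _ Heps) as [d Hd].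
  - intros x _. apply continuity_pt_filterlim. apply Hf.
  - exists d. split. apply cond_pos. intros. apply (Hd x y); auto.
Qed.

Lemma v_nonneg h Rm q mu j w v : standing h Rm q mu j ->
  is_solution h Rm q mu j w v -> inXplus h q mu j w v ->
  (forall t, 0 <= t -> 0 <= w t) -> forall t, 0 <= t -> 0 <= v t.
Proof.
  intros Hst Sol Xp Hw t1 Ht1.
  pose proof Hst as (Hh & HRm & Hmu & Hloc & HDj & HLip & Hjpos & Hjbd & HqB & Hqd & Hqneg).
  pose proof Sol as (Cw & Cv & HU & Hd).
  pose proof Xp as ((_ & _ & Hp0) & _).
  destruct (Rle_or_lt 0 (v t1)) as [|Hneg]; auto. exfalso.
  set (S := fun t => 0 <= t /\ forall tau, 0 <= tau <= t -> 0 <= v tau).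
  assert (HS0 : S 0). { split; [lra|]. intros tau Htau. replace tau with 0 by lra. apply (Hp0 0); lra. }
  assert (HSub : is_upper_bound S t1).
  { intros t [Ht Hv]. destruct (Rle_or_lt t t1); auto. specialize (Hv t1 ltac:(lra)). lra. }
  destruct (completeness S (ex_intro _ t1 HSub) (ex_intro _ 0 HS0)) as [T [HTub HTl]].
  assert (HT0 : 0 <= T) by (apply HTub; auto).
  assert (HTt1 : T <= t1) by (apply HTl; auto).
  assert (HvT0 : forall tau, 0 <= tau < T -> 0 <= v tau).
  { intros tau Htau. destruct (classic (exists t, S t /\ tau < t)) as [[t [[_ Ht] Hlt]]|Hn].
    - apply Ht; lra.
    - exfalso. assert (is_upper_bound S tau).
      { intros t Ht. destruct (Rle_or_lt t tau); auto. exfalso; apply Hn; eauto. }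
      specialize (HTl _ H). lra. }

  assert (HvT : 0 <= v T).
  { destruct (Rle_or_lt 0 (v T)) as [|HvTn]; auto. exfalso.
    destruct (unif_cont v (C1_cont v Cv) (-h-1) (T+1) (- v T) ltac:(lra)) as [d [Hd0 Hdc]].
    destruct (Req_dec T 0) as [E|NE].
    - rewrite E in HvTn. pose proof (Hp0 0 ltac:(lra)). lra.
    - set (tau := Rmax 0 (T - d/2)).
      assert (0 <= tau < T). { unfold tau. split. apply Rmax_l. apply Rmax_lub_lt; lra. }
      pose proof (HvT0 tau H).
      assert (T - d/2 <= tau) by apply Rmax_r.
      specialize (Hdc tau T ltac:(lra) ltac:(lra) ltac:(rewrite Rabs_left by lra; lra)).
      apply Rabs_def2 in Hdc. lra. }
  assert (Hnext : forall eta, 0 < eta -> exists t, T < t <= T + eta /\ v t < 0).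
  { intros eta Heta. apply NNPP. intros Hn.
    assert (S (T + eta)).
    { split; [lra|]. intros tau Htau.
      destruct (Rlt_or_le tau T). apply HvT0; lra.
      destruct (Req_dec tau T). subst; auto.
      destruct (Rle_or_lt 0 (v tau)); auto. exfalso. apply Hn. exists tau. split; [lra|auto]. }
    specialize (HTub _ H). lra. }
  destruct (lipJ h Rm q mu j Hst (shift w T) (shift v T) (HU T HT0)) as [L [del [HL [Hdel HJ]]]].
  set (r := Rmin (del / 3) (- Rm / 4)).
  assert (Hr : 0 < r) by (apply Rmin_glb_lt; lra).
  assert (Hr1 : r <= del / 3) by apply Rmin_l.
  assert (Hr2 : r <= - Rm / 4) by apply Rmin_r.
  destruct Cw as [Cw1 Cw2]. destruct Cv as [Cv1 Cv2].
  destruct (unif_cont w (C1_cont w (conj Cw1 Cw2)) (T-h-1) (T+1) r Hr) as [dw [Hdw Hw']].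
  destruct (unif_cont v (C1_cont v (conj Cv1 Cv2)) (T-h-1) (T+1) r Hr) as [dv [Hdv Hv']].
  destruct (unif_cont (Derive w) Cw2 (T-h-1) (T+1) r Hr) as [dw1 [Hdw1 Hw1']].
  destruct (unif_cont (Derive v) Cv2 (T-h-1) (T+1) r Hr) as [dv1 [Hdv1 Hv1']].
  set (eta := Rmin (Rmin (1/2) (1 / (2 * L))) (Rmin (Rmin (dw/2) (dv/2)) (Rmin (dw1/2) (dv1/2)))).
  assert (Heta : 0 < eta).
  { unfold eta. repeat apply Rmin_glb_lt; try lra. apply Rdiv_lt_0_compat; lra. }
  assert (Heta1 : eta <= 1/2) by (unfold eta; eapply Rle_trans; [apply Rmin_l|apply Rmin_l]).
  assert (HetaL : eta <= 1 / (2 * L)) by (unfold eta; eapply Rle_trans; [apply Rmin_l|apply Rmin_r]).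
  assert (Hetaw : eta < dw) by (unfold eta; eapply Rle_lt_trans; [apply Rmin_r|]; eapply Rle_lt_trans; [apply Rmin_l|];  eapply Rle_lt_trans; [apply Rmin_l|]; lra).
  assert (Hetav : eta < dv) by (unfold eta; eapply Rle_lt_trans; [apply Rmin_r|]; eapply Rle_lt_trans; [apply Rmin_l|];  eapply Rle_lt_trans; [apply Rmin_r|]; lra).
  assert (Hetaw1 : eta < dw1) by (unfold eta; eapply Rle_lt_trans; [apply Rmin_r|]; eapply Rle_lt_trans; [apply Rmin_r|];  eapply Rle_lt_trans; [apply Rmin_l|]; lra).
  assert (Hetav1 : eta < dv1) by (unfold eta; eapply Rle_lt_trans; [apply Rmin_r|]; eapply Rle_lt_trans; [apply Rmin_r|];  eapply Rle_lt_trans; [apply Rmin_r|]; lra).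
  destruct (Hnext eta Heta) as [t1' [Ht1' Hvt1']].
  destruct (continuity_ab_maj (fun t => - v t) T t1') as [t2 [Hmax Ht2]]; [lra| |].
  { intros c Hc. apply continuity_pt_filterlim. apply (continuous_opp v). apply C1_cont. split; auto. }
  set (m := - v t2).
  assert (Hm : 0 < m) by (pose proof (Hmax t1' ltac:(lra)); unfold m; lra).
  assert (HTt2 : T < t2). { destruct (Req_dec T t2); [|lra]. subst t2. unfold m in Hm. lra. }
  assert (Hmr : m < r).
  { pose proof (Hv' t2 T ltac:(lra) ltac:(lra) ltac:(rewrite Rabs_pos_eq by lra; lra)).
    apply Rabs_def2 in H. unfold m. lra. }
  assert (Hj : forall t, T <= t <= t2 -> - (L * m) <= j (shift w t) (shift v t)).
  { intros t Ht.
    assert (Cwt : C1 (shift w t)) by (apply C1_shift; split; auto).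
    assert (Cvt : C1 (shift v t)) by (apply C1_shift; split; auto).
    assert (Hb : forall x, -h <= x <= 0 -> - m <= shift v t x).
    { intros x Hx. unfold shift.
      destruct (Rle_or_lt (t + x) T).
      - destruct (Rlt_or_le (t + x) 0). pose proof (Hp0 (t + x) ltac:(lra)). lra.
        destruct (Req_dec (t + x) T). rewrite H1; lra. pose proof (HvT0 (t + x) ltac:(lra)). lra.
      - pose proof (Hmax (t + x) ltac:(lra)). unfold m. lra. }
    pose proof (HJ (shift w t) (shift v t) m r Cwt Cvt ltac:(lra) ltac:(lra) ltac:(lra) ltac:(lra) Hb) as HJ'.
    rewrite !Derive_shift in HJ' by (split; auto).
    assert (HJ'' : Rabs (j (shift w t) (fun x => shift v t x + m) - j (shift w t) (shift v t)) <= L * m).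
    { apply HJ'. intros x Hx. unfold shift.
      assert (Habs : Rabs ((t + x) - (T + x)) <= eta) by (rewrite Rabs_pos_eq; lra).
      split; [|split; [|split]]; apply Rlt_le; [apply Hw'|apply Hv'|apply Hw1'|apply Hv1']; try (split; lra); lra. }
    assert (0 <= j (shift w t) (fun x => shift v t x + m)).
    { apply Hjpos. split; auto. split. apply C1_addc; auto.
      intros x Hx. split. unfold shift. destruct (Rle_or_lt 0 (t + x)). apply Hw; auto. apply (Hp0 (t+x)); lra.
      pose proof (Hb x Hx); lra. }
    apply Rabs_le_between in HJ''. lra. }
  pose (f := fun t => - v t * exp (mu * t)).
  assert (Hbd := deriv_bound f T t2 (fun t => - Derive v t * exp (mu * t) + - v t * (mu * exp (mu * t)))
          (L * m * exp (mu * t2)) ltac:(lra)).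
  assert (f t2 - f T <= L * m * exp (mu * t2) * (t2 - T)).
  { apply Hbd.
    - intros x Hx. unfold f. auto_derive. apply Cv1. deta; ring.
    - intros x Hx. destruct (Hd x ltac:(lra)) as [_ Hdv'']. rewrite Hdv''.
      pose proof (Hj x Hx).
      assert (exp (mu * x) <= exp (mu * t2)) by (apply exp_le; nra).
      pose proof (exp_pos (mu * x)).
      assert (0 <= L * m) by nra.
      replace (- (j (shift w x) (shift v x) - mu * v x) * exp (mu * x) + - v x * (mu * exp (mu * x)))
        with (- j (shift w x) (shift v x) * exp (mu * x)) by ring.
      nra. }
  unfold f in H. fold m in H.
  pose proof (exp_pos (mu * T)). pose proof (exp_pos (mu * t2)).
  assert (- v T * exp (mu * T) <= 0) by nra.
  assert (L * (t2 - T) <= 1/2).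
  { assert (t2 - T <= 1 / (2 * L)) by lra.
    apply Rmult_le_compat_l with (r := L) in H3; [|lra].
    replace (L * (1 / (2 * L))) with (1/2) in H3 by (field; lra). lra. }
  assert (m * exp (mu * t2) <= L * m * exp (mu * t2) * (t2 - T)) by lra.
  assert (0 < m * exp (mu * t2)) by nra.
  nra.
Qed.

Lemma nrm0_shift_le h w v t B : 0 <= h ->
  (forall s, -h <= s <= 0 -> Rabs (w (t + s)) <= B /\ Rabs (v (t + s)) <= B) ->
  nrm0 h (shift w t) (shift v t) <= B.
Proof.
  intros Hh H. unfold nrm0. apply Rmax_lub; apply sup0_le; auto; intros s Hs; apply H; auto.
Qed.

Lemma nrm1_shift_le h w v t B1 B2 : C1 w -> C1 v -> 0 <= h ->
  (forall s, -h <= s <= 0 -> Rabs (w (t + s)) <= B1 /\ Rabs (v (t + s)) <= B1 /\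
     Rabs (Derive w (t + s)) <= B2 /\ Rabs (Derive v (t + s)) <= B2) ->
  nrm1 h (shift w t) (shift v t) <= B1 + B2.
Proof.
  intros Cw Cv Hh H. unfold nrm1. rewrite !Derive_shift by auto.
  apply Rplus_le_compat; apply nrm0_shift_le; auto; intros s Hs; destruct (H s Hs) as (A1 & A2 & A3 & A4); unfold shift; auto.
Qed.

Lemma nrm0_nonneg h w v : 0 <= h -> 0 <= nrm0 h w v.
Proof. intros Hh. unfold nrm0. eapply Rle_trans; [apply (sup0_nonneg h w Hh)| apply Rmax_l]. Qed.

Lemma nrm0_pt h w v : C1 w -> C1 v -> 0 <= h -> forall s, -h <= s <= 0 ->
  Rabs (w s) <= nrm0 h w v /\ Rabs (v s) <= nrm0 h w v.
Proof.
  intros Cw Cv Hh s Hs. unfold nrm0. split.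
  - eapply Rle_trans; [|apply Rmax_l]. apply sup0_pt; auto. intros; apply C1_cont; auto.
  - eapply Rle_trans; [|apply Rmax_r]. apply sup0_pt; auto. intros; apply C1_cont; auto.
Qed.

Lemma nrm1_pt h w v : C1 w -> C1 v -> 0 <= h -> forall s, -h <= s <= 0 ->
  Rabs (w s) <= nrm1 h w v /\ Rabs (v s) <= nrm1 h w v /\
  Rabs (Derive w s) <= nrm1 h w v /\ Rabs (Derive v s) <= nrm1 h w v.
Proof.
  intros Cw Cv Hh s Hs. unfold nrm1.
  pose proof (nrm0_pt h w v Cw Cv Hh s Hs).
  pose proof (nrm0_nonneg h w v Hh).
  pose proof (nrm0_nonneg h (Derive w) (Derive v) Hh).
  destruct Cw as [Cw1 Cw2]. destruct Cv as [Cv1 Cv2].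
  assert (Rabs (Derive w s) <= nrm0 h (Derive w) (Derive v)).
  { unfold nrm0. eapply Rle_trans; [|apply Rmax_l]. apply sup0_pt; auto. }
  assert (Rabs (Derive v s) <= nrm0 h (Derive w) (Derive v)).
  { unfold nrm0. eapply Rle_trans; [|apply Rmax_r]. apply sup0_pt; auto. }
  lra.
Qed.

Lemma decay f a b c J : (forall t, ex_derive f t) -> 0 < c -> a <= b ->
  (forall t, a <= t <= b -> Derive f t <= J - c * f t) ->
  (f b - J / c) * exp (c * (b - a)) <= f a - J / c.
Proof.
  intros Hf Hc Hab Hd.
  pose (g := fun t => (f t - J / c) * exp (c * t)).
  assert (g b - g a <= 0 * (b - a)).
  { apply (deriv_bound g a b (fun t => Derive f t * exp (c * t) + (f t - J / c) * (c * exp (c * t)))); auto.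
    - intros x Hx. unfold g. auto_derive. apply Hf. deta; ring.
    - intros x Hx. pose proof (Hd x Hx). pose proof (exp_pos (c * x)).
      replace (Derive f x * exp (c * x) + (f x - J / c) * (c * exp (c * x)))
        with ((Derive f x - (J - c * f x)) * exp (c * x)) by (field; lra). nra. }
  unfold g in H. pose proof (exp_pos (c * a)).
  replace (c * (b - a)) with (c * b + - (c * a)) by ring. rewrite exp_plus.
  assert (Hex : exp (- (c * a)) * exp (c * a) = 1) by (rewrite <- exp_plus; replace (- (c * a) + c * a) with 0 by ring; apply exp_0).
  pose proof (exp_pos (- (c * a))).
  apply Rmult_le_reg_r with (exp (c * a)); auto.
  replace ((f b - J / c) * (exp (c * b) * exp (- (c * a))) * exp (c * a)) with
    ((f b - J / c) * exp (c * b) * (exp (- (c * a)) * exp (c * a))) by ring.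
  rewrite Hex. lra.
Qed.

Lemma sol_facts h Rm q mu j w v : standing h Rm q mu j -> q 0 < 0 ->
  is_solution h Rm q mu j w v -> inXplus h q mu j w v ->
  (forall t, -h <= t -> 0 <= w t /\ 0 <= v t) /\
  (forall t, 0 <= t -> q (v t) <= 0) /\
  (forall a b, 0 <= a <= b -> w b <= w a) /\
  (forall t, 0 <= t -> inUplus h (shift w t) (shift v t)).
Proof.
  intros Hst Hq0 Sol Xp.
  pose proof Hst as (Hh & HRm & Hmu & Hloc & HDj & HLip & Hjpos & Hjbd & (Q & HQ) & Hqd & Hqneg).
  pose proof Sol as (Cw & Cv & HU & Hd).
  pose proof Xp as ((_ & _ & Hp0) & _).
  pose proof (w_nonneg h Rm q mu j w v Q Hh HQ Sol Xp) as Hw.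
  pose proof (v_nonneg h Rm q mu j w v Hst Sol Xp Hw) as Hv.
  assert (Hnn : forall t, -h <= t -> 0 <= w t /\ 0 <= v t).
  { intros t Ht. destruct (Rle_or_lt 0 t). split; auto. apply Hp0; lra. }
  assert (Hq : forall t, 0 <= t -> q (v t) <= 0).
  { intros t Ht. destruct (Hv t Ht) as [Hp|He]. apply Rlt_le, Hqneg; auto. rewrite <- He; lra. }
  split; auto. split; auto. split.
  - intros a b Hab. assert (w b - w a <= 0 * (b - a)).
    { apply (deriv_bound w a b (Derive w)); try lra.
      - intros x Hx. apply Derive_correct. apply Cw.
      - intros x Hx. rewrite (proj1 (Hd x ltac:(lra))). pose proof (Hq x ltac:(lra)). pose proof (Hw x ltac:(lra)). nra. }
    lra.
  - intros t Ht. split. apply C1_shift; auto. split. apply C1_shift; auto.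
    intros s Hs. unfold shift. apply Hnn. lra.
Qed.

Lemma bound_along h Rm q mu j w v e d1 : standing h Rm q mu j -> q 0 < 0 ->
  is_solution h Rm q mu j w v -> inXplus h q mu j w v -> 0 <= e ->
  (forall w' v', inUplus h w' v' -> sup0 h w' <= d1 -> j w' v' <= mu * e) ->
  sup0 h w <= d1 -> sup0 h v <= e ->
  forall t, 0 <= t -> j (shift w t) (shift v t) <= mu * e /\
    (forall s, -h <= s <= 0 -> 0 <= w (t + s) <= sup0 h w /\ 0 <= v (t + s) <= e).
Proof.
  intros Hst Hq0 Sol Xp He Hsm Hw0 Hv0.
  pose proof Hst as (Hh & HRm & Hmu & _).
  pose proof Sol as (Cw & Cv & HU & Hd).
  destruct (sol_facts h Rm q mu j w v Hst Hq0 Sol Xp) as (Hnn & Hq & Hmono & HUp).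
  assert (Hwb : forall tau, -h <= tau -> w tau <= sup0 h w).
  { intros tau Ht. destruct (Rle_or_lt tau 0).
    - eapply Rle_trans; [apply Rle_abs|]. apply sup0_pt; try lra. intros; apply C1_cont; auto.
    - eapply Rle_trans; [apply (Hmono 0 tau); lra|]. eapply Rle_trans; [apply Rle_abs|].
      apply sup0_pt; try lra. intros; apply C1_cont; auto. }
  assert (Hj : forall t, 0 <= t -> j (shift w t) (shift v t) <= mu * e).
  { intros t Ht. apply Hsm; auto. apply sup0_le; try lra. intros s Hs. unfold shift.
    rewrite Rabs_pos_eq by (apply Hnn; lra). eapply Rle_trans; [apply Hwb; lra| auto]. }
  assert (Hvb : forall tau, -h <= tau -> v tau <= e).
  { intros tau Ht. destruct (Rle_or_lt tau 0).
    - eapply Rle_trans; [apply Rle_abs|]. eapply Rle_trans; [|apply Hv0]. apply sup0_pt; try lra. intros; apply C1_cont; auto.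
    - pose proof (decay v 0 tau mu (mu * e) (proj1 Cv) Hmu ltac:(lra)) as HD.
      replace (mu * e / mu) with e in HD by (field; lra).
      assert (v 0 <= e).
      { eapply Rle_trans; [apply Rle_abs|]. eapply Rle_trans; [|apply Hv0]. apply sup0_pt; try lra. intros; apply C1_cont; auto. }
      assert ((v tau - e) * exp (mu * (tau - 0)) <= v 0 - e).
      { apply HD. intros t' Ht'. rewrite (proj2 (Hd t' ltac:(lra))). pose proof (Hj t' ltac:(lra)). lra. }
      pose proof (exp_pos (mu * (tau - 0))). nra. }
  intros t Ht. split; auto. intros s Hs. split.
  - split. apply Hnn; lra. apply Hwb; lra.
  - split. apply Hnn; lra. apply Hvb; lra.
Qed.

Lemma w_bound h Rm q mu j w v : standing h Rm q mu j -> q 0 < 0 ->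
  is_solution h Rm q mu j w v -> inXplus h q mu j w v ->
  forall tau, -h <= tau -> 0 <= w tau <= sup0 h w.
Proof.
  intros Hst Hq0 Sol Xp.
  pose proof Hst as (Hh & HRm & Hmu & _).
  pose proof Sol as (Cw & Cv & HU & Hd).
  destruct (sol_facts h Rm q mu j w v Hst Hq0 Sol Xp) as (Hnn & Hq & Hmono & HUp).
  intros tau Ht. split. apply Hnn; auto. destruct (Rle_or_lt tau 0).
    - eapply Rle_trans; [apply Rle_abs|]. apply sup0_pt; try lra. intros; apply C1_cont; auto.
    - eapply Rle_trans; [apply (Hmono 0 tau); lra|]. eapply Rle_trans; [apply Rle_abs|].
      apply sup0_pt; try lra. intros; apply C1_cont; auto.
Qed.

Theorem corollary2 (h Rm : R) (q : R -> R) (mu : R)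
    (j : (R -> R) -> (R -> R) -> R) :
  standing h Rm q mu j ->
  (forall eps, 0 < eps -> exists del, 0 < del /\
     forall w v, inUplus h w v -> sup0 h w <= del -> j w v <= eps) ->
  q 0 < 0 ->
  (* zero is an equilibrium in X_+ *)
  (inXplus h q mu j (fun _ => 0) (fun _ => 0) /\
   is_solution h Rm q mu j (fun _ => 0) (fun _ => 0)) /\
  (* stability in the C-norm *)
  (forall eps, 0 < eps -> exists del, 0 < del /\
     forall w v, is_solution h Rm q mu j w v -> inXplus h q mu j w v ->
       nrm0 h w v <= del ->
       forall t, 0 <= t -> nrm0 h (shift w t) (shift v t) <= eps) /\
  (* stability in the C^1-norm *)
  (forall eps, 0 < eps -> exists del, 0 < del /\
     forall w v, is_solution h Rm q mu j w v -> inXplus h q mu j w v ->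
       nrm1 h w v <= del ->
       forall t, 0 <= t -> nrm1 h (shift w t) (shift v t) <= eps) /\
  (* global attractivity on X_+ in the C- and C^1-norms *)
  (forall w v, is_solution h Rm q mu j w v -> inXplus h q mu j w v ->
     (forall eps, 0 < eps -> exists T, forall t, T <= t ->
        nrm0 h (shift w t) (shift v t) <= eps) /\
     (forall eps, 0 < eps -> exists T, forall t, T <= t ->
        nrm1 h (shift w t) (shift v t) <= eps)).
Proof.
  intros Hst Hsm Hq0.
  pose proof Hst as (Hh & HRm & Hmu & Hloc & HDj & HLip & Hjpos & Hjbd & (Q & HQ) & Hqd & Hqneg).
  assert (HQ0 : 0 <= Q) by (pose proof (HQ 0 HRm); pose proof (Rabs_pos (q 0)); lra).
  assert (Hup0 : inUplus h (fun _ => 0) (fun _ => 0)) by (split; [apply C1_const|split; [apply C1_const| intros; lra]]).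
  assert (Hj00 : j (fun _ => 0) (fun _ => 0) = 0).
  { pose proof (Hjpos _ _ Hup0) as H.
    destruct (Rle_lt_or_eq_dec 0 _ H) as [Hp|He]; auto. exfalso.
    destruct (Hsm (j (fun _ => 0) (fun _ => 0) / 2) ltac:(lra)) as [d [Hd Hdd]].
    pose proof (Hdd _ _ Hup0 ltac:(rewrite sup0_const, Rabs_R0; lra)). lra. }
  split; [split|split; [|split]].
  - split; auto. rewrite !Derive_const. rewrite Hj00. split; ring.
  - split; [apply C1_const|split; [apply C1_const|split]].
    + intros t Ht. unfold shift. split; [apply C1_const|split;[apply C1_const|intros; lra]].
    + intros t Ht. rewrite !Derive_const. unfold shift. cbv beta. rewrite Hj00. split; ring.
  - intros eps Heps. destruct (Hsm (mu * eps) ltac:(nra)) as [d1 [Hd1 Hsm1]].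
    exists (Rmin eps d1). split. apply Rmin_glb_lt; lra.
    intros w v Sol Xp Hn t Ht.
    assert (Hm1 : Rmin eps d1 <= eps) by apply Rmin_l.
    assert (Hm2 : Rmin eps d1 <= d1) by apply Rmin_r.
    assert (A1 : sup0 h w <= nrm0 h w v) by apply Rmax_l.
    assert (A2 : sup0 h v <= nrm0 h w v) by apply Rmax_r.
    destruct (bound_along h Rm q mu j w v eps d1 Hst Hq0 Sol Xp ltac:(lra) Hsm1 ltac:(lra) ltac:(lra) t Ht) as [_ Hb].
    apply nrm0_shift_le; [lra|]. intros s Hs. destruct (Hb s Hs) as [[B1 B2] [B3 B4]].
    rewrite !Rabs_pos_eq by lra. split; lra.
  - intros eps Heps.
    set (e1 := eps / (2 * (1 + 2 * mu))).
    assert (He1 : 0 < e1) by (unfold e1; apply Rdiv_lt_0_compat; lra).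
    assert (He1a : e1 <= eps / 2).
    { unfold e1. unfold Rdiv. apply Rmult_le_compat_l. lra. apply Rinv_le_contravar; lra. }
    assert (He1b : 2 * mu * e1 <= eps / 2).
    { unfold e1. replace (2 * mu * (eps / (2 * (1 + 2 * mu)))) with (eps / 2 * (2 * mu / (1 + 2 * mu))) by (field; lra).
      assert (2 * mu / (1 + 2 * mu) <= 1).
      { apply (Rmult_le_reg_r (1 + 2 * mu)). lra. unfold Rdiv. rewrite Rmult_assoc, Rinv_l by lra. lra. }
      nra. }
    destruct (Hsm (mu * e1) ltac:(nra)) as [d1 [Hd1 Hsm1]].
    set (e2 := eps / (2 * (Q + 1))).
    assert (He2 : 0 < e2) by (unfold e2; apply Rdiv_lt_0_compat; lra).
    assert (He2a : Q * e2 <= eps / 2).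
    { unfold e2. replace (Q * (eps / (2 * (Q + 1)))) with (eps / 2 * (Q / (Q + 1))) by (field; lra).
      assert (Q / (Q + 1) <= 1).
      { apply (Rmult_le_reg_r (Q + 1)). lra. unfold Rdiv. rewrite Rmult_assoc, Rinv_l by lra. lra. }
      nra. }
    set (del := Rmin e1 (Rmin d1 e2)).
    assert (Hdel1 : del <= e1) by apply Rmin_l.
    assert (Hdel2 : del <= d1) by (eapply Rle_trans; [apply Rmin_r| apply Rmin_l]).
    assert (Hdel3 : del <= e2) by (eapply Rle_trans; [apply Rmin_r| apply Rmin_r]).
    exists del. split. unfold del; repeat apply Rmin_glb_lt; lra.
    intros w v Sol Xp Hn t Ht.
    pose proof Sol as (Cw & Cv & HU & Hd).
    destruct (sol_facts h Rm q mu j w v Hst Hq0 Sol Xp) as (Hnn & Hq & Hmono & HUp).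
    assert (A0 : nrm0 h w v <= nrm1 h w v).
    { unfold nrm1. pose proof (nrm0_nonneg h (Derive w) (Derive v) ltac:(lra)). lra. }
    assert (A1 : sup0 h w <= nrm0 h w v) by apply Rmax_l.
    assert (A2 : sup0 h v <= nrm0 h w v) by apply Rmax_r.
    pose proof (bound_along h Rm q mu j w v e1 d1 Hst Hq0 Sol Xp ltac:(lra) Hsm1 ltac:(lra) ltac:(lra)) as Hb.
    eapply Rle_trans; [apply (nrm1_shift_le h w v t e1 (eps / 2)); auto; try lra|lra].
    intros s Hs. destruct (Hb t Ht) as [_ Hb']. destruct (Hb' s Hs) as [[B1 B2] [B3 B4]].
    rewrite (Rabs_pos_eq (w (t + s))) by lra. rewrite (Rabs_pos_eq (v (t + s))) by lra.
    split; [lra|split; [lra|]].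
    destruct (Rle_or_lt (t + s) 0) as [Hle|Hlt].
    + destruct (nrm1_pt h w v Cw Cv ltac:(lra) (t + s) ltac:(lra)) as (_ & _ & C3 & C4). split; lra.
    + destruct (Hd (t + s) ltac:(lra)) as [Dw Dv]. rewrite Dw, Dv.
      destruct (Hb (t + s) ltac:(lra)) as [Hjb _].
      pose proof (Hjpos _ _ (HUp (t + s) ltac:(lra))).
      assert (Hqv : Rabs (q (v (t + s))) <= Q) by (apply HQ; lra).
      split.
      * rewrite Rabs_mult, (Rabs_pos_eq (w (t + s))) by lra.
        assert (Rabs (q (v (t + s))) * w (t + s) <= Q * e2).
        { apply Rmult_le_compat; try lra. apply Rabs_pos. }
        lra.
      * apply Rabs_le. split; nra.
  - intros w v Sol Xp.
    pose proof Sol as (Cw & Cv & HU & Hd).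
    destruct (sol_facts h Rm q mu j w v Hst Hq0 Sol Xp) as (Hnn & Hq & Hmono & HUp).
    pose proof (w_bound h Rm q mu j w v Hst Hq0 Sol Xp) as Hwb.
    set (W0 := sup0 h w). set (DW := sup0 h (Derive w)).
    assert (HW0 : 0 <= W0) by (apply sup0_nonneg; lra).
    assert (Hdw : forall tau, -h <= tau -> Rabs (Derive w tau) <= Rmax DW (Q * W0)).
    { intros tau Ht. destruct (Rle_or_lt tau 0).
      - eapply Rle_trans; [|apply Rmax_l]. apply sup0_pt; try lra. intros; apply Cw.
      - eapply Rle_trans; [|apply Rmax_r]. rewrite (proj1 (Hd tau ltac:(lra))).
        rewrite Rabs_mult. rewrite (Rabs_pos_eq (w tau)) by (apply Hwb; lra).
        apply Rmult_le_compat; try apply Rabs_pos. apply Hwb; lra. apply HQ. pose proof (Hnn tau Ht); lra.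
        apply Hwb; lra. }
    destruct (Hjbd (fun f => exists t, 0 <= t /\ f = shift w t) (fun g => exists t, 0 <= t /\ g = shift v t)) as [Mj HMj].
    { intros f g [t1 [Ht1 ->]] [t2 [Ht2 ->]]. split. apply C1_shift; auto. split. apply C1_shift; auto.
      intros s Hs. unfold shift. split; apply Hnn; lra. }
    { exists (W0 + Rmax DW (Q * W0)). intros f [t [Ht ->]]. rewrite Derive_shift by auto.
      apply Rplus_le_compat; apply sup0_le; try lra; intros s Hs; unfold shift.
      - rewrite Rabs_pos_eq by (apply Hwb; lra). apply Hwb; lra.
      - apply Hdw; lra. }
    assert (HjM : forall t, 0 <= t -> j (shift w t) (shift v t) <= Mj).
    { intros t Ht. eapply Rle_trans; [apply Rle_abs|]. apply HMj; exists t; auto. }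
    assert (HMj0 : 0 <= Mj).
    { eapply Rle_trans; [apply Rabs_pos|]. apply (HMj (shift w 0) (shift v 0)); exists 0; split; auto; lra. }
    set (K := Rmax (v 0) (Mj / mu)).
    assert (HvK : forall tau, 0 <= tau -> v tau <= K).
    { intros tau Ht.
      pose proof (decay v 0 tau mu Mj (proj1 Cv) Hmu Ht) as HD.
      assert (Hx : (v tau - Mj / mu) * exp (mu * (tau - 0)) <= v 0 - Mj / mu).
      { apply HD. intros t' Ht'. rewrite (proj2 (Hd t' ltac:(lra))). pose proof (HjM t' ltac:(lra)). lra. }
      assert (1 <= exp (mu * (tau - 0))) by (rewrite <- exp_0; apply exp_le; nra).
      assert (v 0 <= K) by apply Rmax_l. assert (Mj / mu <= K) by apply Rmax_r.
      destruct (Rle_or_lt (v tau - Mj / mu) 0). lra. nra. }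
    assert (HK0 : 0 <= K) by (eapply Rle_trans; [|apply Rmax_l]; apply Hnn; lra).
    destruct (continuity_ab_maj q 0 K HK0) as [x0 [Hx0 Hx0K]].
    { intros c Hc. apply continuity_pt_filterlim. apply (@ex_derive_continuous R_AbsRing R_NormedModule).
      apply Hqd. lra. }
    set (c := - q x0).
    assert (Hc : 0 < c).
    { unfold c. destruct (Rle_lt_or_eq_dec 0 x0 (proj1 Hx0K)) as [Hp|He].
      - pose proof (Hqneg x0 Hp); lra.
      - rewrite <- He; lra. }
    assert (Hqc : forall tau, 0 <= tau -> q (v tau) <= - c).
    { intros tau Ht. unfold c. rewrite Ropp_involutive. apply Hx0. split. apply Hnn; lra. apply HvK; auto. }
    assert (Hwdec : forall tau, 0 <= tau -> w tau * exp (c * tau) <= w 0).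
    { intros tau Ht. pose proof (decay w 0 tau c 0 (proj1 Cw) Hc Ht) as HD.
      replace (0 / c) with 0 in HD by (field; lra). rewrite !Rminus_0_r in HD. apply HD.
      intros t' Ht'. rewrite (proj1 (Hd t' ltac:(lra))). pose proof (Hqc t' ltac:(lra)).
      pose proof (Hnn t' ltac:(lra)). nra. }
    assert (Hmain : forall eps, 0 < eps -> exists T, forall t, T <= t ->
        nrm0 h (shift w t) (shift v t) <= eps /\ nrm1 h (shift w t) (shift v t) <= eps).
    { intros eps Heps.
      set (e' := eps / (2 + Q + 3 * mu)).
      assert (He' : 0 < e') by (unfold e'; apply Rdiv_lt_0_compat; lra).
      assert (He'e : (2 + Q + 3 * mu) * e' = eps) by (unfold e'; field; lra).
      destruct (Hsm (mu * e') ltac:(nra)) as [d1 [Hd1 Hsm1]].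
      set (d2 := Rmin d1 e').
      assert (Hd2 : 0 < d2) by (apply Rmin_glb_lt; lra).
      assert (Hd21 : d2 <= d1) by apply Rmin_l. assert (Hd22 : d2 <= e') by apply Rmin_r.
      set (T1 := h + w 0 / (c * d2)).
      assert (Hcd : 0 < c * d2) by nra.
      assert (Hw00 : 0 <= w 0) by (apply Hnn; lra).
      assert (HT1 : h <= T1) by (unfold T1; pose proof (Rdiv_le_0_compat (w 0) (c * d2) Hw00 Hcd); lra).
      assert (Hws : forall tau, T1 - h <= tau -> w tau <= d2).
      { intros tau Ht.
        assert (Htau : w 0 / (c * d2) <= tau) by (unfold T1 in Ht; lra).
        assert (Hcdt : w 0 <= c * d2 * tau).
        { apply (Rmult_le_compat_l (c * d2)) in Htau; [|lra].
          replace (c * d2 * (w 0 / (c * d2))) with (w 0) in Htau by (field; lra). lra. }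
        pose proof (Hwdec tau ltac:(lra)). pose proof (exp_ineq1_le (c * tau)).
        pose proof (Hnn tau ltac:(lra)).
        destruct (Rle_or_lt (w tau) d2); auto.
        assert (w tau * (1 + c * tau) <= w tau * exp (c * tau)) by (apply Rmult_le_compat_l; lra).
        assert (0 <= c * tau) by nra.
        nra. }
      assert (Hjs : forall t, T1 <= t -> j (shift w t) (shift v t) <= mu * e').
      { intros t Ht. apply Hsm1. apply HUp; lra. apply sup0_le; try lra. intros s Hs. unfold shift.
        rewrite Rabs_pos_eq by (apply Hnn; lra). pose proof (Hws (t + s) ltac:(lra)). lra. }
      set (T2 := T1 + h + K / (mu * e')).
      assert (HKm : 0 <= K / (mu * e')) by (apply Rdiv_le_0_compat; nra).
      assert (Hvs : forall tau, T1 + K / (mu * e') <= tau -> v tau <= 2 * e').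
      { intros tau Ht.
        pose proof (decay v T1 tau mu (mu * e') (proj1 Cv) Hmu ltac:(lra)) as HD.
        replace (mu * e' / mu) with e' in HD by (field; lra).
        assert (Hx : (v tau - e') * exp (mu * (tau - T1)) <= v T1 - e').
        { apply HD. intros t' Ht'. rewrite (proj2 (Hd t' ltac:(lra))). pose proof (Hjs t' ltac:(lra)). lra. }
        pose proof (HvK T1 ltac:(lra)).
        pose proof (exp_ineq1_le (mu * (tau - T1))).
        assert (HK' : K <= e' * (mu * (tau - T1))).
        { assert (K / (mu * e') <= tau - T1) by lra.
          apply (Rmult_le_compat_l (mu * e')) in H1; [|nra].
          replace (mu * e' * (K / (mu * e'))) with K in H1 by (field; nra). nra. }
        destruct (Rle_or_lt (v tau) (2 * e')); auto.
        assert ((v tau - e') * (1 + mu * (tau - T1)) <= (v tau - e') * exp (mu * (tau - T1))) by (apply Rmult_le_compat_l; lra).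
        assert (0 <= mu * (tau - T1)) by nra.
        nra. }
      exists T2. intros t Ht.
      assert (Hpt : forall s, -h <= s <= 0 ->
        Rabs (w (t + s)) <= 2 * e' /\ Rabs (v (t + s)) <= 2 * e' /\
        Rabs (Derive w (t + s)) <= (Q + 3 * mu) * e' /\ Rabs (Derive v (t + s)) <= (Q + 3 * mu) * e').
      { intros s Hs. unfold T2 in Ht.
        pose proof (Hws (t + s) ltac:(lra)). pose proof (Hvs (t + s) ltac:(lra)).
        pose proof (Hnn (t + s) ltac:(lra)).
        rewrite (Rabs_pos_eq (w (t + s))) by lra. rewrite (Rabs_pos_eq (v (t + s))) by lra.
        split; [lra|split; [lra|]].
        destruct (Hd (t + s) ltac:(lra)) as [Dw Dv]. rewrite Dw, Dv.
        pose proof (Hjs (t + s) ltac:(lra)).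
        pose proof (Hjpos _ _ (HUp (t + s) ltac:(lra))).
        assert (Hqv : Rabs (q (v (t + s))) <= Q) by (apply HQ; lra).
        split.
        - rewrite Rabs_mult, (Rabs_pos_eq (w (t + s))) by lra.
          assert (Rabs (q (v (t + s))) * w (t + s) <= Q * e').
          { apply Rmult_le_compat; try lra. apply Rabs_pos. }
          nra.
        - apply Rabs_le. split; nra. }
      split.
      - eapply Rle_trans. apply nrm0_shift_le; [lra|]. intros s Hs. destruct (Hpt s Hs) as (P1 & P2 & _). split; [apply P1|apply P2]. nra.
      - eapply Rle_trans. apply (nrm1_shift_le h w v t (2 * e') ((Q + 3 * mu) * e')); auto; lra. nra. }
    split; intros eps Heps; destruct (Hmain eps Heps) as [T HT]; exists T; intros t Ht; apply HT; auto.
Qed.
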